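(* Let $W_1$, $W_2$ be monotone complete ordered vector spaces, and assume that $W_1$ carries a faithful normal positive linear functional. Then every sequentially normal positive linear map $\phi: W_1\to W_2$ is normal.
   Context: An ordered vector space $W$ is called monotone complete if every non-empty upper bounded upward directed subset of $W$ has a supremum in $W$. A positive linear functional $\psi$ on $W$ is faithful if $\psi(a)>0$ for every positive $a\neq 0$ in $W$. A positive linear map $\phi:W_1\to W_2$ between monotone complete ordered vector spaces is called normal if $\phi(\sup J)=\sup_{j\in J}\phi(j)$ for every non-empty upper bounded upward directed subset $J$ of $W_1$, and sequentially normal if $\phi(\sup_n j_n)=\sup_n\phi(j_n)$ for every upper bounded increasing sequence $(j_n)$ in $W_1$. (A normal positive linear functional is the case $W_2=\mathbb{R}$.) *)

(* Defs.v *)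
From HB Require Import structures.
From mathcomp Require Import all_boot all_order all_algebra.
From mathcomp Require Import boolp classical_sets reals.
Set Implicit Arguments. Unset Strict Implicit. Unset Printing Implicit Defensive.
Import Order.TTheory GRing.Theory Num.Theory.
Local Open Scope ring_scope.
Local Open Scope classical_set_scope.

Definition is_ub {T : Type} (le : T -> T -> Prop) (A : set T) (u : T) :=
  forall x, A x -> le x u.

Definition is_sup {T : Type} (le : T -> T -> Prop) (A : set T) (s : T) :=
  is_ub le A s /\ forall u, is_ub le A u -> le s u.

Definition upward_directed {T : Type} (le : T -> T -> Prop) (A : set T) :=
  forall a b, A a -> A b -> exists2 c, A c & le a c /\ le b c.

Definition bdd_directed {T : Type} (le : T -> T -> Prop) (A : set T) :=
  [/\ exists x, A x, upward_directed le A & exists u, is_ub le A u].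

Definition ordered_vspace (R : realType) (V : lmodType R) (le : V -> V -> Prop) :=
  [/\ forall x, le x x,
      forall x y, le x y -> le y x -> x = y,
      forall x y z, le x y -> le y z -> le x z,
      forall x y z, le x y -> le (x + z) (y + z)
    & forall (c : R) x y, 0 <= c -> le x y -> le (c *: x) (c *: y)].

Definition monotone_complete {T : Type} (le : T -> T -> Prop) :=
  forall A : set T, bdd_directed le A -> exists s, is_sup le A s.

Definition linear_map (R : realType) (V1 V2 : lmodType R) (f : V1 -> V2) :=
  forall (c : R) x y, f (c *: x + y) = c *: f x + f y.

Definition positive_linear (R : realType) (V1 V2 : lmodType R)
    (le1 : V1 -> V1 -> Prop) (le2 : V2 -> V2 -> Prop) (f : V1 -> V2) :=
  linear_map f /\ forall x, le1 0 x -> le2 0 (f x).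

Definition normal_map {T1 T2 : Type}
    (le1 : T1 -> T1 -> Prop) (le2 : T2 -> T2 -> Prop) (f : T1 -> T2) :=
  forall (J : set T1) s, bdd_directed le1 J -> is_sup le1 J s ->
    is_sup le2 (f @` J) (f s).

Definition seq_normal_map {T1 T2 : Type}
    (le1 : T1 -> T1 -> Prop) (le2 : T2 -> T2 -> Prop) (f : T1 -> T2) :=
  forall (j : nat -> T1) s, (forall n, le1 (j n) (j n.+1)) ->
    (exists u, is_ub le1 (range j) u) -> is_sup le1 (range j) s ->
    is_sup le2 (range (f \o j)) (f s).

Definition faithful_functional (R : realType) (V : lmodType R)
    (le : V -> V -> Prop) (psi : V -> R) :=
  forall a, le 0 a -> a <> 0 -> 0 < psi a.

(* Main.v *)
Require Import Defs.
From HB Require Import structures.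
From mathcomp Require Import all_boot all_order all_algebra.
From mathcomp Require Import boolp classical_sets reals.
From mathcomp Require Import lra.
Import Order.TTheory GRing.Theory Num.Theory.
Local Open Scope ring_scope.

Lemma lin_sub {R : realType} {V1 V2 : lmodType R} {f : V1 -> V2} :
  linear_map f -> forall x y, f (y - x) = f y - f x.
Proof.
move=> lf x y; rewrite addrC -scaleN1r lf scaleN1r addrC //.
Qed.

Lemma pl_mono {R : realType} {V1 V2 : lmodType R} {le1 le2} {f : V1 -> V2} :
  ordered_vspace le1 -> ordered_vspace le2 -> positive_linear le1 le2 f ->
  forall x y, le1 x y -> le2 (f x) (f y).
Proof.
move=> [_ _ _ D1 _] [_ _ _ D2 _] [lf pf] x y lxy.
have h0 : le1 0 (y - x) by have := D1 _ _ (- x) lxy; rewrite subrr.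
have := D2 _ _ (f x) (pf _ h0); rewrite lin_sub // subrK add0r //.
Qed.

Lemma ov_R (R : realType) : ordered_vspace (fun x y : R^o => x <= y).
Proof.
split.
- by move=> x; exact: lexx.
- by move=> x y a b; apply/eqP; rewrite eq_le a b.
- by move=> x y z a b; exact: le_trans a b.
- by move=> x y z a; rewrite lerD2r.
- by move=> c x y c0 a; exact: ler_wpM2l.
Qed.

Lemma aux {R : realType} {a p q r : R} :
  a < p - q -> p - a < r -> r <= q -> False.
Proof. move=> *; lra. Qed.

Theorem theorem2 (R : realType) (W1 W2 : lmodType R)
    (le1 : W1 -> W1 -> Prop) (le2 : W2 -> W2 -> Prop) :
  ordered_vspace le1 -> ordered_vspace le2 ->
  monotone_complete le1 -> monotone_complete le2 ->
  (exists psi : W1 -> R^o,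
      [/\ positive_linear le1 (fun x y : R^o => x <= y) psi,
          faithful_functional le1 psi
        & normal_map le1 (fun x y : R^o => x <= y) psi]) ->
  forall phi : W1 -> W2,
    positive_linear le1 le2 phi -> seq_normal_map le1 le2 phi ->
    normal_map le1 le2 phi.
Proof.
move=> ov1 ov2 mc1 _ [psi [ppsi fpsi npsi]] phi pphi sphi J s bJ supJ.
have ovR := ov_R R.
have mpsi := pl_mono ov1 ovR ppsi.
have mphi := pl_mono ov1 ov2 pphi.
have [refl1 _ trans1 _ _] := ov1.
have [[x0 Jx0] dirJ _] := bJ.
have [ubs leass] := supJ.
have [ubpsi _] := npsi J s bJ supJ.
have ubpsi' : forall x, J x -> psi x <= psi s by move=> x Jx; apply: ubpsi; exists x.
have appr : forall n : nat, exists x, J x /\ psi s - (n.+1%:R)^-1 < psi x.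
  move=> n; apply/not_existsP => H.
  have [_ leP] := npsi J s bJ supJ.
  have : psi s <= psi s - (n.+1%:R)^-1.
    apply: leP => _ [x Jx <-]; rewrite leNgt; apply/negP => lt.
    by apply: (H x).
  by rewrite lerDl oppr_ge0 invr_le0 lern0.
have [f hf] := choice appr.
have dir : forall p : W1 * W1, exists c,
    J p.1 -> J p.2 -> J c /\ le1 p.1 c /\ le1 p.2 c.
  move=> [a b]; case: (pselect (J a /\ J b)) => [[Ja Jb]|nab].
    by have [c Jc [ac bc]] := dirJ a b Ja Jb; exists c.
  by exists a => Ja Jb; exfalso; apply: nab.
have [g hg] := choice dir.
pose k := fix k n := if n is m.+1 then g (k m, f m.+1) else f 0.
have Jk : forall n, J (k n) /\ le1 (f n) (k n).
  elim=> [|n [Jkn _]]; first by split; [exact: (hf 0%N).1 | exact: refl1].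
  by have [Jc [_ ?]] := hg (k n, f n.+1) Jkn (hf n.+1).1; split.
have inck : forall n, le1 (k n) (k n.+1).
  move=> n; by have [_ [? _]] := hg (k n, f n.+1) (Jk n).1 (hf n.+1).1.
have monok : forall m n, (m <= n)%N -> le1 (k m) (k n).
  move=> m n; elim: n => [|n IH]; first by rewrite leqn0 => /eqP ->; exact: refl1.
  rewrite leq_eqVlt => /orP [/eqP ->|]; first exact: refl1.
  by rewrite ltnS => /IH h; exact: trans1 h (inck n).
have ubk : is_ub le1 (range k) s by move=> _ [n _ <-]; apply: ubs; exact: (Jk n).1.
have [t [ubt leat]] : exists t, is_sup le1 (range k) t.
  apply: mc1; split; [by exists (k 0%N), 0%N | | by exists s].
  move=> _ _ [m _ <-] [n _ <-]; exists (k (maxn m n)); first by exists (maxn m n).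
  by split; apply: monok; rewrite ?leq_maxl ?leq_maxr.
have ts : le1 t s by apply: leat.
have st : s = t.
  have h0 : le1 0 (s - t).
    have [_ _ _ D1 _] := ov1; by have := D1 _ _ (- t) ts; rewrite subrr.
  apply/eqP; rewrite -subr_eq0; apply/eqP.
  case: (pselect (s - t = 0)) => // ne; exfalso.
  have := fpsi _ h0 ne; rewrite lin_sub; last exact: ppsi.1.
  rewrite subr_gt0 => lt.
  have d0 : 0 < psi s - psi t by rewrite subr_gt0.
  set n := Num.Def.archi_bound (psi s - psi t)^-1.
  have hi : 0 < (psi s - psi t)^-1 by rewrite invr_gt0.
  have hn := archi_boundP (ltW hi).
  have hkt : psi (k n) <= psi t by apply: mpsi; apply: ubt; exists n.
  have hfk : psi (f n) <= psi (k n) by apply: mpsi; exact: (Jk n).2.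
  have := (hf n).2.
  have : (n.+1%:R)^-1 < psi s - psi t.
    rewrite -[X in _ < X]invrK ltf_pV2 ?posrE ?invr_gt0 //.
    by apply: lt_trans hn _; rewrite ltr_nat.
  move=> h1 h2.
  have h3 := le_trans hfk hkt.
  by have := aux h1 h2 h3.
subst t.
split.
  by move=> _ [x Jx <-]; apply: mphi; apply: ubs.
move=> u ubu.
have [_ lesup] := sphi k s inck (ex_intro _ s ubk) (conj ubk leat).
apply: lesup => _ [n _ <-]; apply: ubu; exists (k n) => //; exact: (Jk n).1.
Qed.
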